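(* Let $\Omega\subset\mathbb R^n$ be a bounded domain, $\alpha<0$, and $\varphi:\partial\Omega\to\mathbb R$ a positive function. If $u$ is a positive solution of $$\mathrm{div}\left(\frac{Du}{\sqrt{1-|Du|^2}}\right)=\frac{\alpha}{u\sqrt{1-|Du|^2}}\ \text{ in }\Omega,\qquad u=\varphi\ \text{ on }\partial\Omega,\qquad |Du|<1\ \text{ in }\overline\Omega,$$ then there exists a constant $C_1=C_1(\alpha,\Omega,\varphi)>0$, depending only on $\alpha$, $\Omega$ and $\varphi$, such that $$\min_{\partial\Omega}\varphi\le u\le C_1\quad\text{in }\Omega.$$ *)

(* Defs.v *)
From HB Require Import structures.
From mathcomp Require Import all_boot all_order all_algebra.
From mathcomp Require Import all_classical all_reals all_analysis.
Set Implicit Arguments. Unset Strict Implicit. Unset Printing Implicit Defensive.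
Import Order.TTheory GRing.Theory Num.Theory.
Import numFieldNormedType.Exports.
Local Open Scope classical_set_scope.
Local Open Scope ring_scope.

Section PDE.
Variables (R : realType) (n : nat).
Local Notation V := 'rV[R]_n.

Definition evec (i : 'I_n) : V := delta_mx 0 i.

Definition partial (f : V -> R) (i : 'I_n) (x : V) : R := 'D_(evec i) f x.

Definition grad_sq (u : V -> R) (x : V) : R := \sum_(i < n) (partial u i x) ^+ 2.

Definition eucl_sq (v : V) : R := \sum_(i < n) (v 0 i) ^+ 2.

Definition divergence (F : V -> V) (x : V) : R :=
  \sum_(i < n) partial (fun y => F y 0 i) i x.

Definition bdry (A : set V) : set V := closure A `\` interior A.

Definition C2_on (O : set V) (u : V -> R) : Prop :=
  forall x, O x ->
    (forall i, derivable u x (evec i)) /\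
    (forall i j, derivable (partial u i) x (evec j) /\
                 {for x, continuous (partial (partial u j) i)}).

Definition C1_closure_spacelike (O : set V) (u : V -> R) : Prop :=
  {within closure O, continuous u} /\
  exists G : V -> V,
    {within closure O, continuous G} /\
    (forall x, O x -> forall i, G x 0 i = partial u i x) /\
    (forall x, closure O x -> eucl_sq (G x) < 1).

Definition positive_solution (O : set V) (alpha : R) (phi u : V -> R) : Prop :=
  [/\ C2_on O u,
      C1_closure_spacelike O u,
      (forall x, O x -> 0 < u x),
      (forall x, O x ->
         divergence (fun y => \row_i (partial u i y / Num.sqrt (1 - grad_sq u y))) x
         = alpha / (u x * Num.sqrt (1 - grad_sq u x))) &
      (forall x, bdry O x -> u x = phi x)].

End PDE.

(* Main.v *)
Require Import Defs.
From HB Require Import structures.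
From mathcomp Require Import all_boot all_order all_algebra.
From mathcomp Require Import all_classical all_reals all_analysis.
From mathcomp Require Import lra.
Import Order.TTheory GRing.Theory Num.Theory.
Import numFieldNormedType.Exports.
Local Open Scope classical_set_scope.
Local Open Scope ring_scope.

Lemma near0_ball (R : realType) (P : R -> Prop) : (\forall h \near ((0:R))^', P h) ->
  exists2 e : R, 0 < e & forall h, `|h| < e -> h != 0 -> P h.
Proof.
rewrite near_withinE nearE => H; have := (nbhs_ballP _ _).1 H.
move=> [e e0 He]; exists e => // h hl hn; apply: He => //.
by rewrite /ball /= sub0r normrN.
Qed.

Section Helpers.
Variables (R : realType) (n : nat).
Local Notation V := 'rV[R]_n.

Lemma quot_line (f : V -> R) (x v : V) (t : R) :
  (fun h : R => h^-1 *: ((f \o shift (t *: v + x)) (h *: v) - f (t *: v + x))) =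
  (fun h : R => h^-1 *: (((fun s : R => f (s *: v + x)) \o shift t) (h *: 1) -
                          (fun s : R => f (s *: v + x)) t)).
Proof.
apply/funext => h /=; congr (_ *: (f _ - _)).
by rewrite [_%:A]mulr1 scalerDl addrA.
Qed.

Lemma derivable_line (f : V -> R) (x v : V) (t : R) :
  derivable f (t *: v + x) v <-> derivable (fun h : R => f (h *: v + x)) t 1.
Proof. by rewrite /derivable quot_line. Qed.

Lemma derive_line (f : V -> R) (x v : V) (t : R) :
  'D_v f (t *: v + x) = 'D_1 (fun h : R => f (h *: v + x)) t.
Proof. by rewrite /derive quot_line. Qed.

Lemma line_cont (f : V -> R) (x v : V) (t : R) :
  derivable f (t *: v + x) v -> {for t, continuous (fun h : R => f (h *: v + x))}.
Proof.
move=> /derivable_line /derivable1_diffP; exact: differentiable_continuous.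
Qed.

Lemma derive_mul0 (f w : V -> R) x v : f x = 0 -> derivable f x v ->
  (fun h : R => w (h *: v + x)) @ 0^' --> w x ->
  'D_v (fun y => f y * w y) x = 'D_v f x * w x.
Proof.
move=> fx0 df cw; apply: cvg_lim => //.
have -> : (fun h : R => h^-1 *: (((fun y => f y * w y) \o shift x) (h *: v) - f x * w x)) =
  (fun h : R => h^-1 *: ((f \o shift x) (h *: v) - f x)) \* (fun h : R => w (h *: v + x)).
  apply/funext => h /=; rewrite fx0 !mul0r subr0 !scalerBr /= scaler0 subr0.
  by rewrite -scalerAl.
by apply: cvgM => //; exact: df.
Qed.

Lemma line0 (x v : V) : 0 *: v + x = x.
Proof. by rewrite scale0r add0r. Qed.

Lemma fermat_line (u : V -> R) (x0 v : V) (r : R) : 0 < r ->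
  (forall t, `|t| < r -> u x0 <= u (t *: v + x0)) ->
  (forall t, `|t| < r -> derivable u (t *: v + x0) v) ->
  'D_v u x0 = 0.
Proof.
move=> r0 Hmin Hd.
have itv t : t \in `](- r), r[ -> `|t| < r by rewrite in_itv /= ltr_norml.
have := @derive1_at_min R (fun h => u (h *: v + x0)) (- r) r 0.
case.
- by rewrite (le_trans _ (ltW r0)) // oppr_le0 ltW.
- by move=> t /itv /Hd /derivable_line.
- by rewrite in_itv /= oppr_lt0 r0.
- by move=> t /itv /Hmin; rewrite line0.
by move=> _ <-; rewrite -derive_line line0.
Qed.

Lemma second_line (u : V -> R) (x0 v : V) (r : R) : 0 < r ->
  (forall t, `|t| < r -> u x0 <= u (t *: v + x0)) ->
  (forall t, `|t| < r -> derivable u (t *: v + x0) v) ->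
  derivable (fun y => 'D_v u y) x0 v ->
  0 <= 'D_v (fun y => 'D_v u y) x0.
Proof.
move=> r0 Hmin Hd Hdp.
rewrite leNgt; apply/negP => dlt0.
have p0 : 'D_v u x0 = 0 := @fermat_line u x0 v r r0 Hmin Hd.
have Hq : (fun h : R => h^-1 *: (((fun y => 'D_v u y) \o shift x0) (h *: v) - 'D_v u x0)) @ 0^' --> 'D_v (fun y => 'D_v u y) x0 := Hdp.
have H1 := cvgr_lt _ Hq _ dlt0.
have [e e0 He] := @near0_ball _ _ (H1 _).
set d := Num.min e r / 2.
have d0 : 0 < d by rewrite divr_gt0 // lt_min e0 r0.
have dlt : d < Num.min e r by rewrite ltr_pdivrMr // ltr_pMr ?ltr1n // lt_min e0 r0.
have [Hde Hdr] : d < e /\ d < r by move: dlt; rewrite lt_min => /andP[].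
have neg t : 0 < t -> t < d -> 'D_v u (t *: v + x0) < 0.
  move=> t0 td.
  have : `|t| < e by rewrite gtr0_norm // (lt_trans td).
  move=> /He /(_ (lt0r_neq0 t0)) /=.
  by rewrite p0 subr0 addrC pmulr_rlt0 // invr_gt0.
have H2 : forall t, t \in `]0, d[ -> is_derive t 1 (fun h => u (h *: v + x0)) ('D_v u (t *: v + x0)).
  move=> t; rewrite in_itv /= => /andP[t0 td]; apply: DeriveDef.
    apply/derivable_line/Hd; rewrite gtr0_norm //; exact: lt_trans td Hdr.
  by rewrite -derive_line.
have H3 : {within `[0, d], continuous (fun h => u (h *: v + x0))}.
  apply: continuous_in_subspaceT => t; rewrite inE /= in_itv /= => /andP[t0 td].
  apply: line_cont; apply: Hd; rewrite ger0_norm //; exact: le_lt_trans td Hdr.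
have [c cI E] := MVT d0 H2 H3.
have := Hmin d; rewrite gtr0_norm // => /(_ Hdr).
rewrite -subr_ge0 -{2}(line0 x0 v) E.
move: cI; rewrite in_itv /= => /andP[c0 cd].
by rewrite subr0 pmulr_lge0 // leNgt neg.
Qed.

Lemma w_line_cont (u : V -> R) (x0 v : V) :
  (forall j, {for 0, continuous (fun h : R => partial u j (h *: v + x0))}) ->
  grad_sq u x0 < 1 ->
  (fun h : R => (Num.sqrt (1 - grad_sq u (h *: v + x0)))^-1) @ 0^' -->
     (Num.sqrt (1 - grad_sq u x0))^-1.
Proof.
move=> Hc g1.
suff : {for 0, continuous (fun h : R => (Num.sqrt (1 - grad_sq u (h *: v + x0)))^-1)}.
  by move/continuous_withinNx; rewrite line0.
rewrite /prop_for /continuous_at /= line0.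
apply: cvgV; first by rewrite sqrtr_eq0 -ltNge subr_gt0.
apply: (@cvg_comp _ _ _ (fun h : R => 1 - grad_sq u (h *: v + x0)) (@Num.sqrt R)); last first.
  exact: sqrt_continuous.
apply: cvgB; first exact: cvg_cst.
rewrite /grad_sq.
apply: (@cvg_big _ _ +%R 0 xpredT add_continuous) => j _.
apply: (@cvg_comp _ _ _ (fun h : R => partial u j (h *: v + x0)) (fun z : R => z ^+ 2)); last first.
  exact: exprn_continuous.
by have := Hc j; rewrite /prop_for /continuous_at /= line0.
Qed.

Lemma norm_evec_le (i : 'I_n) : `|evec R i| <= 1 :> R.
Proof.
rewrite [leLHS]/Num.norm /= mx_normrE; apply: bigmax_le => // -[a b] _ /=.
by rewrite /evec mxE; case: (_ && _); rewrite ?normr1 ?normr0.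
Qed.

Lemma coord_le (y : V) (i : 'I_n) : `|y 0 i| <= `|y|.
Proof.
by rewrite [leRHS]/Num.norm /= mx_normrE; apply/bigmax_geP; right => /=; exists (0, i).
Qed.

Lemma interior_min_contra (Omega : set V) (alpha : R) (u : V -> R) (x0 : V) :
  open Omega -> Omega x0 -> alpha < 0 -> C2_on Omega u -> 0 < u x0 ->
  (forall y, Omega y -> u x0 <= u y) ->
  divergence (fun y => \row_i (partial u i y / Num.sqrt (1 - grad_sq u y))) x0
     = alpha / (u x0 * Num.sqrt (1 - grad_sq u x0)) -> False.
Proof.
move=> oO Ox0 a0 C2 u0 Hmin Heq.
have [r r0 Hr] : exists2 r : R, 0 < r & forall i t, `|t| < r -> Omega (t *: evec R i + x0).
  have := oO _ Ox0; move=> /(nbhs_ballP _ _) [r /= r0 Hball].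
  exists r => // i t tr; apply: Hball.
  rewrite -ball_normE /ball_ /= opprD addrA addrAC subrr sub0r normrN mx_normZ.
  apply: le_lt_trans tr; rewrite -[leRHS]mulr1; apply: ler_wpM2l => //.
  exact: norm_evec_le.
have Hmi i t : `|t| < r -> u x0 <= u (t *: evec R i + x0) by move=> /(Hr i) /Hmin.
have Hdi i t : `|t| < r -> derivable u (t *: evec R i + x0) (evec R i).
  by move=> /(Hr i) /C2 [+ _]; apply.
have p0 i : partial u i x0 = 0 by exact: (@fermat_line u x0 (evec R i) r r0 (Hmi i) (Hdi i)).
have D0 i : 0 <= partial (partial u i) i x0.
  apply: (@second_line u x0 (evec R i) r r0 (Hmi i) (Hdi i)).
  by have [_ /(_ i i) []] := C2 _ Ox0.
have g0 : grad_sq u x0 = 0 by rewrite /grad_sq big1 // => i _; rewrite p0 expr0n.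
move: Heq; rewrite g0 subr0 sqrtr1 mulr1.
have -> : divergence (fun y => \row_i (partial u i y / Num.sqrt (1 - grad_sq u y))) x0
   = \sum_(i < n) partial (partial u i) i x0.
  apply: eq_bigr => i _.
  rewrite /partial.
  have -> : (fun y => (\row_i0 ('D_(evec R i0) u y / Num.sqrt (1 - grad_sq u y))) 0 i) =
     (fun y => 'D_(evec R i) u y * (Num.sqrt (1 - grad_sq u y))^-1).
    by apply/funext => y; rewrite mxE.
  rewrite (@derive_mul0 (fun y => 'D_(evec R i) u y)) //.
  - by rewrite g0 subr0 sqrtr1 invr1 mulr1.
  - exact: p0 i.
  - by have [_ /(_ i i) []] := C2 _ Ox0.
  apply: w_line_cont; last by rewrite g0 ltr01.
  move=> j; apply: line_cont; rewrite line0.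
  by have [_ /(_ j i) []] := C2 _ Ox0.
move=> E; have : 0 <= alpha / u x0 by rewrite -E sumr_ge0.
by rewrite pmulr_lge0 ?invr_gt0 // leNgt a0.
Qed.

Lemma line_dist (e x : V) (i : 'I_n) (a b : R) :
  `|(a *: evec R i + x) - (b *: evec R i + x)| <= `|a - b|.
Proof.
rewrite opprD addrACA subrr addr0 -scalerBl mx_normZ.
by rewrite -[leRHS]mulr1 ler_wpM2l // norm_evec_le.
Qed.

Lemma line_coord (x : V) (i : 'I_n) (t : R) : (t *: evec R i + x) 0 i = t + x 0 i.
Proof. by rewrite !mxE !eqxx mulr1. Qed.

Lemma ray_bound (Omega : set V) (u : V -> R) (i0 : 'I_n) (M : R) (x : V) :
  open Omega -> Omega x -> (forall z, Omega z -> `|z| <= M) ->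
  {within closure Omega, continuous u} ->
  (forall z, Omega z -> derivable u z (evec R i0)) ->
  (forall z, Omega z -> `|'D_(evec R i0) u z| <= 1) ->
  exists2 y, bdry Omega y & u x <= u y + 2 * M.
Proof.
move=> oO Ox HM cu Hd Hb.
set l := fun t : R => t *: evec R i0 + x.
set S := [set t : R | 0 <= t /\ forall s, 0 <= s <= t -> Omega (l s)].
have S0 : S 0.
  split => // s /andP[s0 s0']; have -> : s = 0 by apply/eqP; rewrite eq_le s0 s0'.
  by rewrite /l line0.
have Sub t : S t -> t <= 2 * M.
  move=> [t0 /(_ t)]; rewrite t0 lexx => /(_ isT) /HM Ht.
  have Hx := HM _ Ox.
  have := le_trans (coord_le _ i0) Ht; rewrite /l line_coord => H1.
  have := le_trans (coord_le _ i0) Hx => H2.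
  have -> : t = (t + x 0 i0) - x 0 i0 by rewrite addrK.
  rewrite mulr2n mulrDl mul1r.
  apply: le_trans (ler_norm _) _.
  by rewrite (le_trans (ler_normB _ _)) // lerD.
have hsS : has_sup S by split; [exists 0 | exists (2 * M) => t /Sub].
set T := sup S.
have T0 : 0 <= T by apply: sup_upper_bound.
have TM : T <= 2 * M by apply: ge_sup; [exists 0 | move=> t /Sub].
have Ha s : 0 <= s < T -> Omega (l s).
  move=> /andP[s0 sT].
  have := @sup_adherent R S (T - s); rewrite subr_gt0 => /(_ sT hsS) [t [t0 Ht] st].
  apply: Ht; rewrite s0 /=; move: st; rewrite -/T opprB addrC subrK => /ltW //.
have nO : ~ Omega (l T).
  move=> OT; have := oO _ OT; move=> /(nbhs_ballP _ _) [r /= r0 Hball].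
  have : T + r / 2 <= T.
    apply: sup_upper_bound => //; split; first by rewrite addr_ge0 // divr_ge0 // ltW.
    move=> s /andP[s0 sTr]; have [sT|Ts] := ltP s T; first by apply: Ha; rewrite s0.
    apply: Hball; rewrite -ball_normE /ball_ /=.
    apply: le_lt_trans (line_dist x x i0 T s) _.
    rewrite ler0_norm ?subr_le0 // opprB ltrBlDl.
    apply: le_lt_trans sTr _; rewrite ltrD2l ltr_pdivrMr // ltr_pMr ?ltr1n //.
  by rewrite gerDl leNgt divr_gt0.
have Tpos : 0 < T.
  rewrite lt_def T0 andbT; apply/eqP => T0'; apply: nO; rewrite T0' /l line0 //.
have KO z : Omega z -> closure Omega z by move=> /subset_closure.
have KT : closure Omega (l T).
  move=> B /(nbhs_ballP _ _) [r /= r0 Hball].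
  pose s := Num.max 0 (T - r / 2).
  have s0 : 0 <= s by rewrite le_max lexx.
  have sT : s < T by rewrite gt_max Tpos /= ltrBlDr ltrDl divr_gt0.
  exists (l s); split; first by apply: Ha; rewrite s0 sT.
  apply: Hball; rewrite -ball_normE /ball_ /=.
  apply: le_lt_trans (line_dist x x i0 T s) _.
  rewrite gtr0_norm ?subr_gt0 // ltrBlDl -ltrBlDr.
  have Hs : T - r / 2 <= s by rewrite le_max lexx orbT.
  apply: lt_le_trans Hs; rewrite ltrD2l ltrN2 ltr_pdivrMr // ltr_pMr ?ltr1n //.
have KI t : 0 <= t <= T -> closure Omega (l t).
  move=> /andP[t0 tT]; have [tlt|Tt] := ltP t T; first by apply/KO/Ha; rewrite t0.
  by have -> : t = T by apply/eqP; rewrite eq_le tT.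
have cg : {within `[0, T], continuous (fun t => u (l t))}.
  apply/subspace_continuousP => t; rewrite /= in_itv /= => tI.
  have Hu := (subspace_continuousP _ _).1 cu (l t) (KI t tI).
  apply: (@cvg_comp _ _ _ l u _ (within (closure Omega) (nbhs (l t)))) => //.
  move=> P; rewrite /within /= !nearE => /(nbhs_ballP _ _) [r /= r0 Hball].
  have : nbhs t (fun s => `[0, T]%classic s -> P (l s)).
    apply/(nbhs_ballP _ _); exists r => // s Hs Is; apply: Hball.
      rewrite -ball_normE /ball_ /=; apply: le_lt_trans (line_dist x x i0 t s) _.
      by move: Hs; rewrite -ball_normE /ball_ /=.
    by apply: KI; move: Is; rewrite /= in_itv.
  exact.
have Hder t : t \in `]0, T[ -> is_derive t 1 (fun t => u (l t)) ('D_(evec R i0) u (l t)).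
  rewrite in_itv /= => /andP[t0 tT].
  have Ot : Omega (l t) by apply: Ha; rewrite ltW ?tT.
  apply: DeriveDef; first exact/derivable_line/Hd.
  by rewrite /l -derive_line.
have [c cI E] := MVT Tpos Hder cg.
exists (l T).
  by split => //; rewrite (interior_id Omega).1.
have Oc : Omega (l c) by apply: Ha; move: cI; rewrite in_itv /= => /andP[/ltW -> ->].
have := Hb _ Oc; rewrite ler_norml => /andP[Hc _].
have -> : x = l 0 by rewrite /l line0.
have -> : u (l 0) = u (l T) - 'D_(evec R i0) u (l c) * (T - 0) by rewrite -E opprB addrC subrK.
rewrite subr0 lerD2l -mulNr; apply: le_trans TM.
by rewrite -[leRHS]mul1r ler_wpM2r // lerNl.
Qed.

End Helpers.

Theorem proposition4p6 (R : realType) (n : nat) (Omega : set 'rV[R]_n)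
    (alpha : R) (phi : 'rV[R]_n -> R) :
  (0 < n)%N ->
  open Omega -> connected Omega -> Omega !=set0 -> bounded_set Omega ->
  alpha < 0 ->
  (forall x, bdry Omega x -> 0 < phi x) ->
  exists C1 : R, 0 < C1 /\
    forall u : 'rV[R]_n -> R, positive_solution Omega alpha phi u ->
      forall x, Omega x ->
        inf [set phi y | y in bdry Omega] <= u x /\ u x <= C1.
Proof.
move=> n0 oO cO O0 bO a0 phipos.
have [M0 M0pos HM] : exists2 M0 : R, 0 < M0 & forall z, Omega z -> `|z| <= M0.
  case: bO => M [Mreal HM]; exists (`|M| + 1).
    by rewrite ltr_pwDr.
  move=> z Oz; apply: (HM (`|M| + 1)) => //.
  by apply: le_lt_trans (real_ler_norm Mreal) _; rewrite ltrDl.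
have HK z : closure Omega z -> `|z| <= M0.
  move=> Kz; rewrite leNgt; apply/negP => zM.
  have zM' : 0 < `|z| - M0 by rewrite subr_gt0.
  have [w [Ow Bw]] := Kz (ball z (`|z| - M0)) (nbhsx_ballx _ _ zM').
  move: Bw; rewrite -ball_normE /ball_ /= => Bw.
  have := HM w Ow => Hw.
  have H1 : `|z| <= `|z - w| + `|w| by rewrite -{1}(subrK w z) ler_normD.
  have H2 : `|z - w| + `|w| < (`|z| - M0) + M0 by apply: ltr_leD.
  by move: (le_lt_trans H1 H2); rewrite subrK ltxx.
have Kc : compact (closure Omega).
  apply: bounded_closed_compact; last exact: closed_closure.
  exists M0; split; first exact: num_real.
  by move=> y yM z Kz /=; apply: le_trans (HK z Kz) (ltW yM).
have intO : interior Omega = Omega := (interior_id Omega).1 oO.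
have KO z : Omega z -> closure Omega z by move=> /subset_closure.
have K0 : closure Omega !=set0 by case: O0 => z Oz; exists z; exact: KO.
pose i0 : 'I_n := Ordinal n0.
case: (pselect (exists B, forall y, bdry Omega y -> phi y <= B)) => [[B HB]|nB]; last first.
  exists 1; split => // u [_ [cu _] _ _ Hbd] x Ox; exfalso; apply: nB.
  have [c _ Hc] := compact_EVT_max K0 Kc cu.
  exists (u c) => y By; rewrite -Hbd //; apply: Hc; rewrite inE; exact: By.1.
exists (`|B| + 2 * M0 + 1); split.
  by rewrite ltr_pwDr // addr_ge0 // mulr_ge0 // ltW.
move=> u [C2 [cu [G [cG [HG HG1]]]] upos Heq Hbd] x Ox; split.
  have [c cK Hc] := compact_EVT_min K0 Kc cu; rewrite inE in cK.
  case: (pselect (Omega c)) => Oc.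
    exfalso; apply: (@interior_min_contra R n Omega alpha u c oO Oc a0 C2 (upos c Oc)).
      by move=> y Oy; apply: Hc; rewrite inE; exact: KO.
    exact: Heq c Oc.
  have bc : bdry Omega c by split; rewrite ?intO.
  apply: le_trans (Hc x _); last by rewrite inE; exact: KO.
  rewrite Hbd //; apply: ge_inf; last by exists c.
  by exists 0 => _ [y By <-]; exact: ltW (phipos y By).
have Hd z : Omega z -> derivable u z (evec R i0) by move=> /C2 [+ _]; apply.
have Hb z : Omega z -> `|'D_(evec R i0) u z| <= 1.
  move=> Oz; have := HG1 z (KO z Oz).
  rewrite /eucl_sq (bigD1 i0) //= HG // => H.
  have : (partial u i0 z) ^+ 2 < 1.
    apply: le_lt_trans H; rewrite lerDl sumr_ge0 // => j _; exact: sqr_ge0.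
  rewrite /partial => H2; rewrite ler_norml; apply/andP; split; nra.
have [y By Hy] := @ray_bound R n Omega u i0 M0 x oO Ox HM cu Hd Hb.
apply: le_trans Hy _; rewrite Hbd // [X in _ <= X]addrAC lerD2r.
apply: le_trans (HB y By) _; apply: le_trans (real_ler_norm (num_real B)) _; rewrite lerDl ler01 //.
Qed.
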